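(* Let $N\ge1$, $m\ge1$ be integers, let $k_1,k_2,k_3,k$ be integers with $k_1+k_2+k_3=2k$, $0\le k_j\le k\le N$, put $n=mN-k$, and let $g$ be a non-negative integer. Let $\mathbf{P}_m^{(N|k_1,k_2,k_3)}(t_1,\dots,t_n)$ be the symmetric polynomial defined in the context and expand $\prod_{1\le i<j\le n}(t_i-t_j)^{2g}\,\mathbf{P}_m^{(N|k_1,k_2,k_3)}(t_1,\dots,t_n)=\sum_{\nu}C_{\nu_1,\dots,\nu_n}t_1^{\nu_1}\cdots t_n^{\nu_n}.$ If $\nu_1\le\nu_2\le\dots\le\nu_n$ and $C_{\nu_1,\dots,\nu_n}\neq0$, then the following inequalities hold: $\nu_{pN+j}\ge p+(pN+j-1)g$ for $p=0,\dots,m-2$, $j=1,\dots,N-k_1$; $\nu_{pN+j}\ge p+1+(pN+j-1)g$ for $p=0,\dots,m-2$, $j=N-k_1+1,\dots,N$; $\nu_{N(m-1)+j}\ge m-1+((m-1)N+j-1)g$ for $j=1,\dots,N-k$; and $\nu_{pN+j}\le m+p-1+((m+p)N-k+j-2)g$ for $p=0,\dots,m-1$, $j=1,\dots,N-k$; $\nu_{pN+j}\le m+p-1+((m+p)N-k+j-2)g$ for $p=0,\dots,m-2$, $j=N-k+1,\dots,N-k+k_3$; $\nu_{pN+j}\le m+p+((m+p)N-k+j-2)g$ for $p=0,\dots,m-2$, $j=N-k+k_3+1,\dots,N$.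
   Context: Definition: fix a partition of $\{1,\dots,n\}$ into $N$ groups $s_1,\dots,s_N$, where $s_1,\dots,s_k$ have $m-1$ elements each and $s_{k+1},\dots,s_N$ have $m$ elements each. Let $\chi_1=\{s_1,\dots,s_{k-k_1}\}$, $\chi_2=\{s_{k-k_1+1},\dots,s_{k_3}\}$, $\chi_3=\{s_{k_3+1},\dots,s_k\}$. Define $p(x_1,x_2,x_3|t_1,\dots,t_n)=\prod_{q=1}^N\prod_{i<j\in s_q}(t_i-t_j)^2\prod_{j\in\chi_1}(t_j-x_2)(t_j-x_3)\prod_{j\in\chi_2}(t_j-x_1)(t_j-x_3)\prod_{j\in\chi_3}(t_j-x_1)(t_j-x_2)$ (''$j\in\chi_a$'' meaning $j$ lies in one of the groups of $\chi_a$), $\Lambda_m=\left[\frac{N^{n}k!(N-k)!}{N!}\right]^{1/2}(m!)^{N-k}((m-1)!)^{k}$, and $\mathbf{P}_m^{(N|k_1,k_2,k_3)}(x_1,x_2,x_3|t)=\Lambda_m^{-1}\sum_{\sigma\in S_n}p(x_1,x_2,x_3|t_{\sigma(1)},\dots,t_{\sigma(n)})$. Then $\mathbf{P}_m^{(N|k_1,k_2,k_3)}(t_1,\dots,t_n)=(-1)^{(m-1)k_1}\lim_{x_3\to\infty}x_3^{-(m-1)k_3}\,\mathbf{P}_m^{(N|k_1,k_2,k_3)}(0,1,x_3|t_1,\dots,t_n)$. *)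

(* Defs.v *)
From HB Require Import structures.
From mathcomp Require Import all_boot all_order all_algebra all_fingroup.
From mathcomp Require Import mpoly.
Unset Printing Implicit Defensive.
Import Order.TTheory GRing.Theory Num.Theory.
Local Open Scope ring_scope.

(* The partition s_1,...,s_N of {1,...,n} is encoded by the map
   s : 'I_n -> 'I_N sending an index to (the 0-based label of) its group. *)
Definition is_partition_mk (n N m k : nat) (s : 'I_n -> 'I_N) : Prop :=
  forall q : 'I_N, #|[set i | s i == q]| = if (q < k)%N then (m - 1)%N else m.

(* p(x1,x2,x3 | t_1,...,t_n), with values in an arbitrary commutative ring S.
   chi_1 = groups with 0-based label q < k-k1,
   chi_2 = groups with k-k1 <= q < k3,
   chi_3 = groups with k3 <= q < k. *)
Definition pfun (S : comNzRingType) (n N k k1 k3 : nat) (s : 'I_n -> 'I_N)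
    (x1 x2 x3 : S) (t : 'I_n -> S) : S :=
  (\prod_(q < N) \prod_(i < n) \prod_(j < n | [&& (i < j)%N, s i == q & s j == q])
      (t i - t j) ^+ 2) *
  \prod_(j < n)
     (if (s j < k - k1)%N then (t j - x2) * (t j - x3)
      else if (s j < k3)%N then (t j - x1) * (t j - x3)
      else if (s j < k)%N then (t j - x1) * (t j - x2)
      else 1).

Definition Lambda (R : rcfType) (n N m k : nat) : R :=
  Num.sqrt (((N ^ n * k`! * (N - k)`!)%:R) / ((N`!)%:R)) *
  (((m`!) ^ (N - k) * ((m - 1)`!) ^ k)%:R).

(* P_m^{(N|k1,k2,k3)}(0,1,x3 | t) as a polynomial in the variable x3
   with coefficients in {mpoly R[n]} (variables t_i = 'X_i). *)
Definition P013 (R : rcfType) (n N m k k1 k3 : nat) (s : 'I_n -> 'I_N)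
    : {poly {mpoly R[n]}} :=
  ((Lambda R n N m k)^-1)%:MP%:P *
  \sum_(sigma : 'S_n)
     pfun _ n N k k1 k3 s 0 1 'X (fun i => ('X_(sigma i))%:P).

(* P_m^{(N|k1,k2,k3)}(t) = (-1)^{(m-1)k1} lim_{x3 -> oo} x3^{-(m-1)k3} P(0,1,x3|t).
   Since P(0,1,x3|t) is a polynomial in x3 of degree <= (m-1)k3, this limit is
   its coefficient of x3^{(m-1)k3}. *)
Definition Pm (R : rcfType) (n N m k k1 k3 : nat) (s : 'I_n -> 'I_N)
    : {mpoly R[n]} :=
  (-1) ^+ ((m - 1) * k1) * (P013 R n N m k k1 k3 s)`_((m - 1) * k3).

Definition vdm_pow (R : rcfType) (n g : nat) : {mpoly R[n]} :=
  \prod_(i < n) \prod_(j < n | (i < j)%N) ('X_i - 'X_j) ^+ (2 * g).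

(* Main.v *)
Require Import Defs.
From HB Require Import structures.
From mathcomp Require Import all_boot all_order all_algebra all_fingroup.
From mathcomp Require Import mpoly.
From mathcomp Require Import zify ring.
Import Order.TTheory GRing.Theory Num.Theory.

Lemma pair_sum n (b : 'I_n -> bool) :
  ((\sum_(i < n) \sum_(j < n | (i < j)%N) (b i && b j)) * 2 + \sum_(i < n) b i =
   (\sum_(i < n) b i) * (\sum_(i < n) b i))%N.
Proof.
rewrite big_distrlr /=.
have step : forall i : 'I_n, (\sum_(j < n) b i * b j =
    \sum_(j < n | (i < j)%N) (b i && b j) + \sum_(j < n | (j < i)%N) (b j && b i) + b i)%N.
  move=> i; rewrite (bigID (fun j : 'I_n => (i < j)%N)) /=.
  rewrite [X in _ + X](bigD1 i) ?ltnn //=.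
  have -> : \sum_(j < n | ~~ (i < j)%N && (j != i)) b i * b j =
            \sum_(j < n | (j < i)%N) (b j && b i).
    apply: eq_big => j; first by rewrite -leqNgt ltn_neqAle andbC.
    by move=> _; case: (b i); case: (b j).
  rewrite (_ : (b i * b i)%N = b i); last by case: (b i).
  have -> : \sum_(j < n | (i < j)%N) b i * b j = \sum_(j < n | (i < j)%N) (b i && b j).
    by apply: eq_bigr => j _; case: (b i); case: (b j).
  ring.
rewrite (eq_bigr _ (fun i _ => step i)) !big_split /=.
rewrite (exchange_big_dep (fun _ => true)) //=.
rewrite muln2 -addnn; congr (_ + _ + _).
Qed.

Local Open Scope ring_scope.

Section Occ.
Context {R : rcfType} {n : nat}.
Local Notation MP := {mpoly R[n]}.
Local Notation PP := {poly {mpoly R[n]}}.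

Definition occ (P : PP) (e : nat) (mu : 'X_{1..n}) := (P`_e)@_mu != 0.

Lemma occM P Q e mu : occ (P * Q) e mu ->
  exists e1 e2 m1 m2, [/\ e = (e1 + e2)%N, mu = (m1 + m2)%MM, occ P e1 m1 & occ Q e2 m2].
Proof.
rewrite /occ coefM raddf_sum /=.
case: (pickP (fun j : 'I_e.+1 => (P`_j * Q`_(e - j))@_mu != 0)) => [j nz _ | h].
- move: nz; rewrite -mcoeff_msupp => /msuppM_le/allpairsP [[m1 m2] /= [h1 h2 ->]].
  exists j, (e - j)%N, m1, m2; split => //.
  + by rewrite subnKC // -ltnS.
  + by rewrite -mcoeff_msupp.
  + by rewrite -mcoeff_msupp.
- by rewrite big1 ?eqxx // => j _; apply/eqP; move: (h j) => /negbFE.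
Qed.

Lemma occD P Q e mu : occ (P + Q) e mu -> occ P e mu \/ occ Q e mu.
Proof.
rewrite /occ coefD mcoeffD.
case: (eqVneq (P`_e)@_mu 0) => [->|]; last by left.
by rewrite add0r; right.
Qed.

Lemma occN P e mu : occ (- P) e mu -> occ P e mu.
Proof. by rewrite /occ coefN mcoeffN oppr_eq0. Qed.

Lemma occ0 e mu : ~ occ 0 e mu.
Proof. by rewrite /occ coef0 mcoeff0 eqxx. Qed.

Lemma occC (c : MP) e mu : occ c%:P e mu -> e = 0%N /\ c@_mu != 0.
Proof. by rewrite /occ coefC; case: e => [|e] //=; rewrite mcoeff0 eqxx. Qed.

Lemma occ1 e mu : occ 1 e mu -> e = 0%N /\ mu = 0%MM.
Proof.
rewrite -polyC1 => /occC [-> ]; rewrite mcoeff1.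
by case: (mu =P 0%MM) => [->|_]; rewrite ?mulr0n ?eqxx.
Qed.

Lemma occXi (i : 'I_n) e mu : occ ('X_i)%:P e mu -> e = 0%N /\ mu = U_(i)%MM.
Proof.
move=> /occC [-> ]; rewrite mcoeffX.
by case: (U_(i)%MM =P mu) => [->|_]; rewrite ?mulr0n ?eqxx.
Qed.

Lemma occX e mu : occ 'X e mu -> e = 1%N /\ mu = 0%MM.
Proof.
rewrite /occ coefX; case: (e =P 1%N) => [->|_]; last by rewrite mcoeff0 eqxx.
by rewrite mcoeff1; case: (mu =P 0%MM) => [->|_]; rewrite ?mulr0n ?eqxx.
Qed.

Definition Fw (a : int) (w : 'I_n -> int) (e : nat) (mu : 'X_{1..n}) : int :=
  a * e%:Z + \sum_(i < n) w i * (mu i)%:Z.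

Lemma FwD a w e1 e2 m1 m2 :
  Fw a w (e1 + e2) (m1 + m2)%MM = Fw a w e1 m1 + Fw a w e2 m2.
Proof.
rewrite /Fw PoszD mulrDr.
have -> : \sum_(i < n) w i * ((m1 + m2)%MM i)%:Z =
          \sum_(i < n) w i * (m1 i)%:Z + \sum_(i < n) w i * (m2 i)%:Z.
  by rewrite -big_split /=; apply: eq_bigr => i _; rewrite mnmDE PoszD mulrDr.
ring.
Qed.

Lemma Fw0 a w : Fw a w 0 0%MM = 0.
Proof. by rewrite /Fw mulr0 add0r big1 // => i _; rewrite mnm0E mulr0. Qed.

Lemma FwU a w i : Fw a w 0 U_(i)%MM = w i.
Proof.
rewrite /Fw mulr0 add0r (bigD1 i) //= big1 ?addr0.
  by rewrite mnm1E eqxx mulr1.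
by move=> j /negbTE ji; rewrite mnm1E eq_sym ji mulr0.
Qed.

Definition bnd (P : PP) a w (b : int) := forall e mu, occ P e mu -> Fw a w e mu <= b.

Lemma bnd_le P a w b b' : b <= b' -> bnd P a w b -> bnd P a w b'.
Proof. by move=> le h e mu /h /le_trans; apply. Qed.

Lemma bndM P Q a w b1 b2 : bnd P a w b1 -> bnd Q a w b2 -> bnd (P * Q) a w (b1 + b2).
Proof.
move=> h1 h2 e mu /occM [e1 [e2 [m1 [m2 [-> -> o1 o2]]]]].
by rewrite FwD lerD ?h1 ?h2.
Qed.

Lemma bnd1 a w : bnd 1 a w 0.
Proof. by move=> e mu /occ1 [-> ->]; rewrite Fw0. Qed.

Lemma bnd0 a w b : bnd 0 a w b.
Proof. by move=> e mu /occ0. Qed.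

Lemma bndB P Q a w b1 b2 : bnd P a w b1 -> bnd Q a w b2 -> bnd (P - Q) a w (Num.max b1 b2).
Proof.
move=> h1 h2 e mu /occD [/h1|/occN/h2] h; rewrite le_max h ?orbT //.
Qed.

Lemma bndXi a w i : bnd ('X_i)%:P a w (w i).
Proof. by move=> e mu /occXi [-> ->]; rewrite FwU. Qed.

Lemma bndX a w : bnd 'X a w a.
Proof.
move=> e mu /occX [-> ->]; rewrite /Fw mulr1 big1 ?addr0 //.
by move=> i _; rewrite mnm0E mulr0.
Qed.

Lemma bnd_prod (I : Type) (r : seq I) (Pr : pred I) (f : I -> PP) (b : I -> int) a w :
  (forall i, Pr i -> bnd (f i) a w (b i)) ->
  bnd (\prod_(i <- r | Pr i) f i) a w (\sum_(i <- r | Pr i) b i).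
Proof.
move=> h; apply: (big_ind2 (fun P c => bnd P a w c)) => //.
- exact: bnd1.
- by move=> ? ? ? ?; apply: bndM.
Qed.

Lemma bnd_sum (I : Type) (r : seq I) (Pr : pred I) (f : I -> PP) b a w :
  (forall i, Pr i -> bnd (f i) a w b) ->
  bnd (\sum_(i <- r | Pr i) f i) a w b.
Proof.
move=> h; apply: (big_ind (fun P => bnd P a w b)) => //.
- exact: bnd0.
- move=> P Q h1 h2 e mu /occD [/h1|/h2] //.
Qed.

Lemma bndX_exp P a w b k : bnd P a w b -> bnd (P ^+ k) a w (b *+ k).
Proof.
move=> h; elim: k => [|k ih]; first by rewrite expr0 mulr0n; apply: bnd1.
by rewrite exprS mulrS; apply: bndM.
Qed.


Lemma bnd_vdm g a w :
  bnd ((vdm_pow R n g)%:P) a w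
    (\sum_(i < n) \sum_(j < n | (i < j)%N) (Num.max (w i) (w j) *+ (2 * g))).
Proof.
rewrite /vdm_pow rmorph_prod; apply: bnd_prod => i _.
rewrite rmorph_prod; apply: bnd_prod => j _.
rewrite rmorphXn rmorphB; apply: bndX_exp; apply: bndB; apply: bndXi.
Qed.

End Occ.

Definition Bpf n (N k k1 k3 : nat) (s : 'I_n -> 'I_N) (sg : 'S_n) (a : int) (w : 'I_n -> int) :=
  (\sum_(q < N) \sum_(i < n) \sum_(j < n | [&& (i < j)%N, s i == q & s j == q])
       (Num.max (w (sg i)) (w (sg j)) *+ 2)
   + \sum_(j < n) (if (s j < k - k1)%N then Num.max (w (sg j)) 0 + Num.max (w (sg j)) a
      else if (s j < k3)%N then w (sg j) + Num.max (w (sg j)) a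
      else if (s j < k)%N then w (sg j) + Num.max (w (sg j)) 0 else 0)).

Definition Bvdm n g (w : 'I_n -> int) :=
  \sum_(i < n) \sum_(j < n | (i < j)%N) (Num.max (w i) (w j) *+ (2 * g)).

Lemma bnd_pfun (R : rcfType) n (N k k1 k3 : nat) (s : 'I_n -> 'I_N) (sg : 'S_n) a w :
 bnd (pfun _ n N k k1 k3 s 0 1 'X (fun i => ('X_(sg i) : {mpoly R[n]})%:P)) a w
  (\sum_(q < N) \sum_(i < n) \sum_(j < n | [&& (i < j)%N, s i == q & s j == q])
       (Num.max (w (sg i)) (w (sg j)) *+ 2)
   + \sum_(j < n) (if (s j < k - k1)%N then Num.max (w (sg j)) 0 + Num.max (w (sg j)) a
      else if (s j < k3)%N then w (sg j) + Num.max (w (sg j)) a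
      else if (s j < k)%N then w (sg j) + Num.max (w (sg j)) 0 else 0)).
Proof.
rewrite /pfun; apply: bndM.
  apply: bnd_prod => q _; apply: bnd_prod => i _; apply: bnd_prod => j _.
  by apply: bndX_exp; apply: bndB; apply: bndXi.
apply: bnd_prod => j _.
case: ifP => _.
  by apply: bndM; apply: bndB; [apply: bndXi|apply: bnd1|apply: bndXi|apply: bndX].
case: ifP => _.
  apply: bndM; last by apply: bndB; [apply: bndXi|apply: bndX].
  by rewrite subr0; apply: bndXi.
case: ifP => _; last by apply: bnd1.
apply: bndM; last by apply: bndB; [apply: bndXi|apply: bnd1].
by rewrite subr0; apply: bndXi.
Qed.

Lemma reduce (R : rcfType) N m k k1 k3 n g s (nu : 'X_{1..n}) a w b :
  (vdm_pow R n g * Pm R n N m k k1 k3 s)@_nu != 0 ->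
  (forall sg : 'S_n, Bvdm n g w + Bpf n N k k1 k3 s sg a w <= b) ->
  Fw a w ((m - 1) * k3) nu <= b.
Proof.
move=> H hb.
set d := ((m - 1) * k3)%N.
set Sig := \sum_(sg : 'S_n) pfun _ n N k k1 k3 s 0 1 'X (fun i => ('X_(sg i) : {mpoly R[n]})%:P).
have H2 : occ ((vdm_pow R n g)%:P * Sig) d nu.
  move: H; rewrite /occ coefCM /Pm /P013 coefCM -/Sig -/d.
  set V := vdm_pow R n g; set C := (Lambda R n N m k)^-1.
  set Y := Sig`_d.
  rewrite mulrCA mulrCA -signr_odd mulr_sign.
  by case: (odd _); rewrite ?mulrN ?mcoeffN ?oppr_eq0 mulrCA mcoeffCM mulf_eq0 negb_or => /andP [].


move: H2; rewrite /Sig mulr_sumr; apply: bnd_sum => sg _.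
apply: (bnd_le _ _ _ _ _ (hb sg)); apply: bndM; [exact: bnd_vdm | exact: bnd_pfun].
Qed.

Lemma PoszS (I : Type) (r : seq I) (P : pred I) (F : I -> nat) :
  (\sum_(i <- r | P i) F i)%N%:Z = \sum_(i <- r | P i) (F i)%:Z.
Proof. by rewrite (big_morph Posz PoszD (erefl _)). Qed.

Lemma pair_sumZ n (b : 'I_n -> bool) :
  (\sum_(i < n) \sum_(j < n | (i < j)%N) ((b i && b j) : nat)%:Z) * 2 =
   (\sum_(i < n) (b i : nat))%:Z * (\sum_(i < n) (b i : nat))%:Z - (\sum_(i < n) (b i : nat))%:Z.
Proof.
have := pair_sum n b => /(congr1 (fun x : nat => x%:Z)).
rewrite PoszD !PoszM => <-.
rewrite !PoszS; under [in RHS]eq_bigr => i _ do rewrite PoszS. ring.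
Qed.

Lemma sum_pred_group n N (s : 'I_n -> 'I_N) (f : 'I_n -> int) (h : 'I_N -> int) :
  \sum_(j < n) h (s j) * f j = \sum_(q < N) h q * \sum_(j < n | s j == q) f j.
Proof.
rewrite (partition_big s xpredT) //=.
apply: eq_bigr => q _; rewrite mulr_sumr; apply: eq_bigr => j /eqP ->; done.
Qed.

Lemma sum_group_cnt n N (s : 'I_n -> 'I_N) (b : 'I_n -> bool) q :
  \sum_(j < n | s j == q) (b j : nat)%:Z = (\sum_(j < n) ((b j && (s j == q)) : nat))%:Z.
Proof.
rewrite PoszS big_mkcond /=; apply: eq_bigr => j _.
by case: (b j); case: (s j == q).
Qed.

Lemma sum_groups_total n N (s : 'I_n -> 'I_N) (b : 'I_n -> bool) :
  (\sum_(q < N) \sum_(j < n) (b j && (s j == q)) = \sum_(j < n) b j)%N.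
Proof.
rewrite exchange_big /=; apply: eq_bigr => j _.
rewrite (bigD1 (s j)) //= eqxx andbT big1 ?addn0 //.
by move=> q /negbTE; rewrite eq_sym => ->; rewrite andbF.
Qed.

Lemma sum_perm n (sg : 'S_n) (Q : pred 'I_n) :
  (\sum_(i < n) Q (sg i) = \sum_(v < n) Q v)%N.
Proof.
by rewrite [RHS](reindex_inj (@perm_inj _ sg)).
Qed.

Lemma maxZ2 (x y : bool) (t : nat) :
  Num.max (- (x : nat)%:Z) (- (y : nat)%:Z) *+ t = - (((x && y) : nat)%:Z * t%:Z).
Proof. rewrite -mulr_natr; case: x; case: y => /=. all: by rewrite ?oppr0 ?maxxx ?mul1r ?mul0r ?oppr0 ?mulN1r ?natz. Qed.

Lemma Bvdm_low n g (Q : pred 'I_n) :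
  Bvdm n g (fun v => - ((Q v : nat)%:Z)) =
  - (g%:Z * ((\sum_v (Q v : nat))%:Z * (\sum_v (Q v : nat))%:Z - (\sum_v (Q v : nat))%:Z)).
Proof.
rewrite -pair_sumZ /Bvdm.
under eq_bigr => i _ do under eq_bigr => j _ do rewrite maxZ2.
rewrite mulr_suml mulr_sumr -sumrN; apply: eq_bigr => i _.
rewrite mulr_suml mulr_sumr -sumrN; apply: eq_bigr => j _.
rewrite PoszM; ring.
Qed.

Lemma Bpf_low n N k k1 k3 (s : 'I_n -> 'I_N) (sg : 'S_n) (Q : pred 'I_n) :
  (k3 <= k)%N ->
  Bpf n N k k1 k3 s sg 0 (fun v => - ((Q v : nat)%:Z)) =
  - \sum_(q < N) ((\sum_(i < n) ((Q (sg i) && (s i == q)) : nat))%:Z *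
                  (\sum_(i < n) ((Q (sg i) && (s i == q)) : nat))%:Z
                 - (\sum_(i < n) ((Q (sg i) && (s i == q)) : nat))%:Z
                 + ((k - k1 <= q < k)%N : nat)%:Z *
                   (\sum_(i < n) ((Q (sg i) && (s i == q)) : nat))%:Z).
Proof.
move=> hk3; rewrite /Bpf.
have Hp : forall q : 'I_N,
  \sum_(i < n) \sum_(j < n | [&& (i < j)%N, s i == q & s j == q])
     Num.max (- (Q (sg i) : nat)%:Z) (- (Q (sg j) : nat)%:Z) *+ 2 =
  - ((\sum_(i < n) ((Q (sg i) && (s i == q)) : nat))%:Z *
     (\sum_(i < n) ((Q (sg i) && (s i == q)) : nat))%:Z
     - (\sum_(i < n) ((Q (sg i) && (s i == q)) : nat))%:Z).
  move=> q; rewrite -(pair_sumZ _ (fun i => Q (sg i) && (s i == q))).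
  rewrite mulr_suml -sumrN; apply: eq_bigr => i _.
  rewrite mulr_suml -sumrN big_mkcond [RHS]big_mkcond; apply: eq_bigr => j _.
  rewrite maxZ2.
  by case: (i < j)%N; case: (s i == q); case: (s j == q); case: (Q (sg i)); case: (Q (sg j)).
rewrite (eq_bigr _ (fun q _ => Hp q)) sumrN.
have Hl : forall j : 'I_n,
  (if (s j < k - k1)%N then Num.max (- (Q (sg j) : nat)%:Z) 0 + Num.max (- (Q (sg j) : nat)%:Z) 0
   else if (s j < k3)%N then - (Q (sg j) : nat)%:Z + Num.max (- (Q (sg j) : nat)%:Z) 0
   else if (s j < k)%N then - (Q (sg j) : nat)%:Z + Num.max (- (Q (sg j) : nat)%:Z) 0 else 0)
  = - (((k - k1 <= s j < k)%N : nat)%:Z * (Q (sg j) : nat)%:Z).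
  move=> j.
  case: ifP => h1.
    by rewrite [(k - k1 <= _)%N]leqNgt h1 /=; case: (Q (sg j)) => /=; lia.
  rewrite [(k - k1 <= _)%N]leqNgt h1 /=.
  case: ifP => h2.
    by rewrite (leq_trans h2 hk3) /=; case: (Q (sg j)) => /=; lia.
  by case: ifP => h3 /=; case: (Q (sg j)) => /=; lia.
rewrite (eq_bigr _ (fun j _ => Hl j)) sumrN.
rewrite (sum_pred_group _ _ s (fun j => (Q (sg j) : nat)%:Z) (fun q => ((k - k1 <= q < k)%N : nat)%:Z)).
rewrite -opprD -big_split /=; congr (- _); apply: eq_bigr => q _.
by rewrite sum_group_cnt.
Qed.

Lemma maxP2 (x y : bool) (t : nat) :
  Num.max ((x : nat)%:Z) ((y : nat)%:Z) *+ t = t%:Z - (((~~ x && ~~ y) : nat)%:Z * t%:Z).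
Proof. rewrite -mulr_natr natz; case: x; case: y => /=; lia. Qed.

Lemma sum_true n : (\sum_(i < n) (true : nat))%N = n.
Proof. by rewrite sum_nat_const card_ord muln1. Qed.

Lemma Bvdm_up n g (Q : pred 'I_n) :
  Bvdm n g (fun v => (Q v : nat)%:Z) =
  g%:Z * (n%:Z * n%:Z - n%:Z) -
  g%:Z * ((\sum_v (~~ Q v : nat))%:Z * (\sum_v (~~ Q v : nat))%:Z - (\sum_v (~~ Q v : nat))%:Z).
Proof.
have hn := pair_sumZ n (fun _ => true); rewrite sum_true in hn.
rewrite -pair_sumZ -hn /Bvdm.
under eq_bigr => i _ do under eq_bigr => j _ do rewrite maxP2.
rewrite !mulr_suml !mulr_sumr -sumrB; apply: eq_bigr => i _.
rewrite !mulr_suml !mulr_sumr -sumrB; apply: eq_bigr => j _.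
rewrite PoszM /=; ring.
Qed.

Lemma Bpf_up n N k k1 k3 (s : 'I_n -> 'I_N) (sg : 'S_n) (Q : pred 'I_n) :
  (k3 <= k)%N -> (k - k1 <= k3)%N ->
  Bpf n N k k1 k3 s sg 1 (fun v => (Q v : nat)%:Z) =
  \sum_(q < N)
    (let M := (\sum_(i < n) (s i == q : nat))%:Z in
     let e := (\sum_(i < n) ((~~ Q (sg i) && (s i == q)) : nat))%:Z in
     (M * M - M) - (e * e - e) + ((q < k3)%N : nat)%:Z * M +
     (((q < k3)%N : nat)%:Z + 2 * ((k3 <= q < k)%N : nat)%:Z) * (M - e)).
Proof.
move=> hk3 hk13; rewrite /Bpf.
have Hp : forall q : 'I_N,
  \sum_(i < n) \sum_(j < n | [&& (i < j)%N, s i == q & s j == q])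
     Num.max ((Q (sg i) : nat)%:Z) ((Q (sg j) : nat)%:Z) *+ 2 =
  let M := (\sum_(i < n) (s i == q : nat))%:Z in
  let e := (\sum_(i < n) ((~~ Q (sg i) && (s i == q)) : nat))%:Z in
  (M * M - M) - (e * e - e).
  move=> q /=; rewrite -(pair_sumZ _ (fun i => ~~ Q (sg i) && (s i == q))).
  rewrite -(pair_sumZ _ (fun i => s i == q)).
  rewrite !mulr_suml -sumrB; apply: eq_bigr => i _.
  rewrite !mulr_suml -sumrB big_mkcond [RHS]big_mkcond; apply: eq_bigr => j _.
  rewrite maxP2.
  by case: (i < j)%N; case: (s i == q); case: (s j == q); case: (Q (sg i)); case: (Q (sg j)).
rewrite (eq_bigr _ (fun q _ => Hp q)).
have Hl : forall j : 'I_n,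
  (if (s j < k - k1)%N then Num.max ((Q (sg j) : nat)%:Z) 0 + Num.max ((Q (sg j) : nat)%:Z) 1
   else if (s j < k3)%N then (Q (sg j) : nat)%:Z + Num.max ((Q (sg j) : nat)%:Z) 1
   else if (s j < k)%N then (Q (sg j) : nat)%:Z + Num.max ((Q (sg j) : nat)%:Z) 0 else 0)
  = ((s j < k3)%N : nat)%:Z * 1 +
    (((s j < k3)%N : nat)%:Z + 2 * ((k3 <= s j < k)%N : nat)%:Z) * (Q (sg j) : nat)%:Z.
  move=> j.
  case: ifP => h1.
    have h1' : (s j < k3)%N by apply: leq_trans h1 hk13.
    by rewrite h1' leqNgt h1' /=; case: (Q (sg j)) => /=; lia.
  case: ifP => h2.
    by rewrite [(k3 <= _)%N]leqNgt h2 /=; case: (Q (sg j)) => /=; lia.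
  by rewrite [(k3 <= _)%N]leqNgt h2 /=; case: ifP => h3 /=; case: (Q (sg j)) => /=; lia.
rewrite (eq_bigr _ (fun j _ => Hl j)).
set LIN := \sum_(j < n) _.
have -> : LIN = \sum_(q < N)
    (((q < k3)%N : nat)%:Z * (\sum_(i < n) (s i == q : nat))%:Z +
     (((q < k3)%N : nat)%:Z + 2 * ((k3 <= q < k)%N : nat)%:Z) *
     ((\sum_(i < n) (s i == q : nat))%:Z - (\sum_(i < n) ((~~ Q (sg i) && (s i == q)) : nat))%:Z)).
  rewrite /LIN big_split /=.
  have := sum_pred_group _ _ s (fun j => 1) (fun q => ((q < k3)%N : nat)%:Z).
  rewrite /= => ->.
  have := (sum_pred_group _ _ s (fun j => (Q (sg j) : nat)%:Z)
    (fun q => ((q < k3)%N : nat)%:Z + 2 * ((k3 <= q < k)%N : nat)%:Z)).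
  rewrite /= => ->.
  rewrite -big_split /=; apply: eq_bigr => q _.
  rewrite sum_group_cnt.
  have -> : \sum_(j < n | s j == q) (1 : int) = (\sum_(i < n) (s i == q : nat))%:Z.
    by rewrite PoszS big_mkcond /=; apply: eq_bigr => j _; case: (s j == q).
  have -> : (\sum_(j < n) ((Q (sg j) && (s j == q)) : nat))%:Z =
     (\sum_(i < n) (s i == q : nat))%:Z - (\sum_(i < n) ((~~ Q (sg i) && (s i == q)) : nat))%:Z.
    rewrite !PoszS -sumrB; apply: eq_bigr => j _.
    by case: (Q (sg j)); case: (s j == q).
  done.
rewrite -big_split /=; apply: eq_bigr => q _.
ring.
Qed.

Lemma icount_lt N b : (b <= N)%N -> (\sum_(q < N) ((q < b)%N : nat))%N = b.
Proof.
move=> hb.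
rewrite -(big_mkord xpredT (fun q => ((q < b)%N : nat))) (big_cat_nat (leq0n b) hb) /=.
have h1 : (\sum_(b <= i < N) ((i < b)%N : nat))%N = 0%N.
  rewrite big_nat_cond big1 // => q /andP [/andP [h _] _].
  by rewrite ltnNge h.
have h2 : (\sum_(0 <= i < b) ((i < b)%N : nat))%N = b.
  rewrite big_nat_cond (eq_bigr (fun _ => 1%N)); last by move=> q /andP [/andP [_ ->] _].
  by rewrite -big_nat_cond sum_nat_const_nat subn0 muln1.
by rewrite h1 h2 addn0.
Qed.

Lemma icount N a b : (a <= b)%N -> (b <= N)%N ->
  (\sum_(q < N) ((a <= q < b)%N : nat))%N = (b - a)%N.
Proof.
move=> hab hb.
have e : forall q : 'I_N, ((a <= q < b)%N : nat) = (((q < b)%N : nat) - ((q < a)%N : nat))%N.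
  move=> q; rewrite leqNgt; case: (ltnP q a) => h /=.
    by rewrite (leq_trans h hab).
  by rewrite subn0.
rewrite (eq_bigr _ (fun q _ => e q)).
have sub_sum : forall (f g : 'I_N -> nat), (forall q, g q <= f q)%N ->
    (\sum_q (f q - g q) = \sum_q f q - \sum_q g q)%N.
  move=> f g hfg; apply/eqP; rewrite -(eqn_add2r (\sum_q g q)) subnK; last exact: leq_sum.
  by rewrite -big_split /=; apply/eqP; apply: eq_bigr => q _; rewrite subnK.
rewrite sub_sum; first by rewrite !icount_lt // (leq_trans hab hb).
move=> q; case: (ltnP q a) => h //=; by rewrite (leq_trans h hab).
Qed.

Lemma tangent (c p : int) : 2 * p * c - p * (p + 1) <= c * c - c.
Proof.
have [h|h] : c <= p \/ p + 1 <= c by lia.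
  have : 0 <= (p - c) * (p + 1 - c) by apply: mulr_ge0; lia.
  lia.
have : 0 <= (c - p) * (c - p - 1) by apply: mulr_ge0; lia.
lia.
Qed.

Lemma lower_gen (R : rcfType) N m k k1 k3 n g (s : 'I_n -> 'I_N) (nu : 'X_{1..n})
    (i : 'I_n) (LB : int) :
  (k3 <= k)%N ->
  (forall i j : 'I_n, (i <= j)%N -> (nu i <= nu j)%N) ->
  (vdm_pow R n g * Pm R n N m k k1 k3 s)@_nu != 0 ->
  (forall c : 'I_N -> nat, (\sum_(q < N) c q)%N = i.+1 ->
     LB <= \sum_(q < N) ((c q)%:Z * (c q)%:Z - (c q)%:Z + ((k - k1 <= q < k)%N : nat)%:Z * (c q)%:Z)) ->
  g%:Z * (i.+1%:Z * i.+1%:Z - i.+1%:Z) + LB <= i.+1%:Z * (nu i)%:Z.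
Proof.
move=> hk3 hsort H hLB.
pose Q : pred 'I_n := fun v => (v <= i)%N.
have hQ : (\sum_(v < n) (Q v : nat))%N = i.+1.
  have := icount n 0 i.+1 (leq0n _) (ltn_ord i).
  rewrite subn0 => <-; by apply: eq_bigr.
have := reduce R N m k k1 k3 n g s nu 0 (fun v => - ((Q v : nat)%:Z))
          (- (g%:Z * (i.+1%:Z * i.+1%:Z - i.+1%:Z) + LB)) H.
have hb : forall sg : 'S_n, Bvdm n g (fun v => - ((Q v : nat)%:Z)) +
            Bpf n N k k1 k3 s sg 0 (fun v => - ((Q v : nat)%:Z)) <=
          - (g%:Z * (i.+1%:Z * i.+1%:Z - i.+1%:Z) + LB).
  move=> sg; rewrite Bvdm_low Bpf_low // hQ.
  have := hLB (fun q => \sum_(i0 < n) (Q (sg i0) && (s i0 == q)))%N.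
  rewrite sum_groups_total sum_perm hQ => /(_ erefl) h.
  rewrite opprD lerD2l lerN2; exact: h.
move=> /(_ hb) {hb}.
rewrite /Fw mul0r add0r.
have hs : \sum_(v < n) (- (Q v : nat)%:Z) * (nu v)%:Z >= - (i.+1%:Z * (nu i)%:Z).
  rewrite -hQ PoszS mulr_suml -sumrN; apply: ler_sum => v _.
  rewrite mulNr lerN2 /Q; case: (leqP v i) => h /=; last by rewrite !mul0r.
  by rewrite !mul1r lez_nat; apply: hsort.
move=> h2; have := le_trans hs h2; rewrite lerN2; done.
Qed.

Lemma upper_gen (R : rcfType) N m k k1 k3 n g (s : 'I_n -> 'I_N) (nu : 'X_{1..n})
    (i : 'I_n) (UB : int) :
  (k3 <= k)%N -> (k - k1 <= k3)%N ->
  (forall i j : 'I_n, (i <= j)%N -> (nu i <= nu j)%N) ->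
  (vdm_pow R n g * Pm R n N m k k1 k3 s)@_nu != 0 ->
  (forall e : 'I_N -> nat, (\sum_(q < N) e q)%N = i ->
     \sum_(q < N)
    (let M := (\sum_(i < n) (s i == q : nat))%:Z in
     (M * M - M) - ((e q)%:Z * (e q)%:Z - (e q)%:Z) + ((q < k3)%N : nat)%:Z * M +
     (((q < k3)%N : nat)%:Z + 2 * ((k3 <= q < k)%N : nat)%:Z) * (M - (e q)%:Z)) <= UB) ->
  ((m - 1) * k3)%N%:Z + (n - i)%N%:Z * (nu i)%:Z <=
    g%:Z * (n%:Z * n%:Z - n%:Z) - g%:Z * (i%:Z * i%:Z - i%:Z) + UB.
Proof.
move=> hk3 hk13 hsort H hUB.
pose Q : pred 'I_n := fun v => (i <= v)%N.
have hQ : (\sum_(v < n) (Q v : nat))%N = (n - i)%N.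
  have := icount n i n (ltnW (ltn_ord i)) (leqnn n).
  by move=> <-; apply: eq_bigr => v _; rewrite /Q ltn_ord andbT.
have hQc : (\sum_(v < n) (~~ Q v : nat))%N = i.
  have := icount n 0 i (leq0n _) (ltnW (ltn_ord i)).
  by rewrite subn0 => <-; apply: eq_bigr => v _; rewrite /Q -ltnNge.
have := reduce R N m k k1 k3 n g s nu 1 (fun v => ((Q v : nat)%:Z))
          (g%:Z * (n%:Z * n%:Z - n%:Z) - g%:Z * (i%:Z * i%:Z - i%:Z) + UB) H.
have hb : forall sg : 'S_n, Bvdm n g (fun v => ((Q v : nat)%:Z)) +
            Bpf n N k k1 k3 s sg 1 (fun v => ((Q v : nat)%:Z)) <=
          g%:Z * (n%:Z * n%:Z - n%:Z) - g%:Z * (i%:Z * i%:Z - i%:Z) + UB.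
  move=> sg; rewrite Bvdm_up Bpf_up // hQc lerD2l.
  apply: hUB.
  have := sum_groups_total _ _ s (fun i0 => ~~ Q (sg i0)).
  move=> ->; rewrite (sum_perm _ sg (fun v => ~~ Q v)); exact: hQc.
move=> /(_ hb) {hb}.
rewrite /Fw mul1r.
have hs : (n - i)%N%:Z * (nu i)%:Z <= \sum_(v < n) ((Q v : nat)%:Z) * (nu v)%:Z.
  rewrite -hQ PoszS mulr_suml; apply: ler_sum => v _.
  rewrite /Q; case: (leqP i v) => h /=; last by rewrite !mul0r.
  by rewrite !mul1r lez_nat; apply: hsort.
move=> h2; apply: le_trans h2; rewrite lerD2l; exact: hs.
Qed.

Lemma sum_lin2 N (c f : 'I_N -> nat) (a b t : int) :
  \sum_(q < N) (a * (c q)%:Z - b + t * (f q)%:Z) =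
  a * (\sum_(q < N) c q)%N%:Z - N%:Z * b + t * (\sum_(q < N) f q)%N%:Z.
Proof.
rewrite big_split sumrB /= -!mulr_sumr !PoszS sumr_const card_ord -mulr_natl natz.
done.
Qed.

Lemma low_fin (p N j g x t : nat) (LB : int) :
  (1 <= j)%N ->
  g%:Z * ((p * N + j)%:Z * (p * N + j)%:Z - (p * N + j)%:Z) + LB <= (p * N + j)%:Z * x%:Z ->
  (p * N + j)%:Z * (t%:Z - 1) < LB ->
  (t + (p * N + j - 1) * g <= x)%N.
Proof.
move=> hj h1 h2.
rewrite leqNgt; apply/negP => hlt.
have hx : x%:Z <= t%:Z - 1 + (p * N + j - 1)%:Z * g%:Z by lia.
have hpos : 0 <= (p * N + j)%:Z * (t%:Z - 1 + (p * N + j - 1)%:Z * g%:Z - x%:Z).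
  apply: mulr_ge0; lia.
have e : (p * N + j - 1)%:Z = (p * N + j)%:Z - 1 by lia.
rewrite e in hpos.
lia.
Qed.

Lemma up_fin (n i g x U0 : nat) (Cl : int) :
  (i < n)%N ->
  (n - i)%N%:Z * x%:Z <= g%:Z * (n%:Z * n%:Z - n%:Z) - g%:Z * (i%:Z * i%:Z - i%:Z) + Cl ->
  Cl < (n - i)%N%:Z * (U0%:Z + 1) ->
  (x <= U0 + (n + i - 1) * g)%N.
Proof.
move=> hi h1 h2.
rewrite leqNgt; apply/negP => hlt.
have e1 : (n - i)%N%:Z = n%:Z - i%:Z by lia.
have e2 : (n + i - 1)%N%:Z = n%:Z + i%:Z - 1 by lia.
have hx : U0%:Z + 1 + (n%:Z + i%:Z - 1) * g%:Z <= x%:Z by lia.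
have hpos : 0 <= (n%:Z - i%:Z) * (x%:Z - (U0%:Z + 1 + (n%:Z + i%:Z - 1) * g%:Z)).
  apply: mulr_ge0; lia.
rewrite e1 in h1 h2.
lia.
Qed.

Lemma partM n N m k (s : 'I_n -> 'I_N) : is_partition_mk n N m k s ->
  forall q : 'I_N, (\sum_(i < n) (s i == q : nat))%N = if (q < k)%N then (m - 1)%N else m.
Proof.
move=> hp q; rewrite -hp -sum1_card [RHS]big_mkcond /=; apply: eq_bigr => i _.
by rewrite inE; case: (s i == q).
Qed.

Lemma consec (e a : int) : 0 <= (e - a) * (e - a - 1).
Proof.
have [h|h] : e <= a \/ a + 1 <= e by lia.
  have -> : (e - a) * (e - a - 1) = (a - e) * (a + 1 - e) by ring.
  apply: mulr_ge0; lia.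
apply: mulr_ge0; lia.
Qed.

Lemma sum3 N (f1 f2 f3 e : 'I_N -> nat) (A1 A2 A3 l : int) :
  \sum_(q < N) ((f1 q)%:Z * A1 + (f2 q)%:Z * A2 + (f3 q)%:Z * A3 - l * (e q)%:Z) =
  (\sum_(q < N) f1 q)%N%:Z * A1 + (\sum_(q < N) f2 q)%N%:Z * A2 +
  (\sum_(q < N) f3 q)%N%:Z * A3 - l * (\sum_(q < N) e q)%N%:Z.
Proof.
by rewrite !big_split /= sumrN -!mulr_suml -!mulr_sumr !PoszS.
Qed.

Lemma lowA (R : rcfType) N m k k1 k3 n g (s : 'I_n -> 'I_N) (nu : 'X_{1..n}) (p j t : nat) (i : 'I_n) :
  (k3 <= k)%N ->
  (forall i j : 'I_n, (i <= j)%N -> (nu i <= nu j)%N) ->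
  (vdm_pow R n g * Pm R n N m k k1 k3 s)@_nu != 0 ->
  (1 <= j)%N -> val i = (p * N + j - 1)%N -> t = p ->
  (t + (p * N + j - 1) * g <= nu i)%N.
Proof.
move=> hk3 hsort H hj hi ->.
have hi1 : (i.+1 = p * N + j)%N by move: hi; rewrite /= => ->; lia.
pose LB : int := 2 * p%:Z * (p * N + j)%N%:Z - N%:Z * (p%:Z * (p%:Z + 1)).
have L := lower_gen R N m k k1 k3 n g s nu i LB hk3 hsort H.
apply: (low_fin _ _ _ _ _ _ LB hj).
  rewrite -hi1; apply: L => c hc.
  have := ler_sum (index_enum 'I_N) (P := xpredT)
     (F := fun q => 2 * p%:Z * (c q)%:Z - p%:Z * (p%:Z + 1) + 0 * ((k - k1 <= q < k)%N : nat)%:Z)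
     (G := fun q => (c q)%:Z * (c q)%:Z - (c q)%:Z + ((k - k1 <= q < k)%N : nat)%:Z * (c q)%:Z).
  rewrite sum_lin2 hc hi1 => h; apply: le_trans (h _); first by rewrite /LB; lia.
  move=> q _; have := tangent (c q)%:Z p%:Z.
  by case: ((k - k1 <= q < k)%N) => /=; lia.
rewrite /LB.
have : 0 <= p%:Z * j%:Z by apply: mulr_ge0.
lia.
Qed.

Lemma lowB (R : rcfType) N m k k1 k3 n g (s : 'I_n -> 'I_N) (nu : 'X_{1..n}) (p j : nat) (i : 'I_n) :
  (k3 <= k)%N -> (k1 <= k)%N -> (k <= N)%N ->
  (forall i j : 'I_n, (i <= j)%N -> (nu i <= nu j)%N) ->
  (vdm_pow R n g * Pm R n N m k k1 k3 s)@_nu != 0 ->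
  (N - k1 + 1 <= j)%N -> (1 <= j)%N -> val i = (p * N + j - 1)%N ->
  (p + 1 + (p * N + j - 1) * g <= nu i)%N.
Proof.
move=> hk3 hk1 hkN hsort H hjk hj hi.
have hi1 : (i.+1 = p * N + j)%N by move: hi; rewrite /= => ->; lia.
pose LB : int := (2 * p%:Z + 1) * (p * N + j)%N%:Z - N%:Z * ((p%:Z + 1) * (p%:Z + 1)) + (p%:Z + 1) * k1%:Z.
have L := lower_gen R N m k k1 k3 n g s nu i LB hk3 hsort H.
apply: (low_fin _ _ _ _ _ _ LB hj).
  rewrite -hi1; apply: L => c hc.
  have := ler_sum (index_enum 'I_N) (P := xpredT)
     (F := fun q => (2 * p%:Z + 1) * (c q)%:Z - (p%:Z + 1) * (p%:Z + 1) + (p%:Z + 1) * ((k - k1 <= q < k)%N : nat)%:Z)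
     (G := fun q => (c q)%:Z * (c q)%:Z - (c q)%:Z + ((k - k1 <= q < k)%N : nat)%:Z * (c q)%:Z).
  rewrite sum_lin2 hc hi1 icount ?leq_subr // (subKn hk1) => h.
  apply: le_trans (h _); first by rewrite /LB; lia.
  move=> q _; have := tangent (c q)%:Z p%:Z.
  have := sqr_ge0 ((c q)%:Z - p%:Z - 1).
  by case: ((k - k1 <= q < k)%N) => /=; lia.
rewrite /LB.
have : 0 <= (p%:Z + 1) * (j%:Z + k1%:Z - N%:Z - 1) by apply: mulr_ge0; lia.
lia.
Qed.

Lemma upG (R : rcfType) N m k k1 k3 n g (s : 'I_n -> 'I_N) (nu : 'X_{1..n}) (i : 'I_n)
    (lam K0 K1 K2 : int) :
  (k3 <= k)%N -> (k - k1 <= k3)%N -> (k <= N)%N -> (1 <= m)%N ->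
  (forall i j : 'I_n, (i <= j)%N -> (nu i <= nu j)%N) ->
  (vdm_pow R n g * Pm R n N m k k1 k3 s)@_nu != 0 ->
  (forall q : 'I_N, (\sum_(i < n) (s i == q : nat))%N = if (q < k)%N then (m - 1)%N else m) ->
  (forall e : int, 0 <= e -> lam * e - K0 <= e * e - e) ->
  (forall e : int, 0 <= e -> lam * e - K1 <= e * e) ->
  (forall e : int, 0 <= e -> lam * e - K2 <= e * e + e) ->
  (n - i)%N%:Z * (nu i)%:Z <= g%:Z * (n%:Z * n%:Z - n%:Z) - g%:Z * (i%:Z * i%:Z - i%:Z) +
   (k3%:Z * ((m%:Z - 1) * (m%:Z - 1) + K1) + (k%:Z - k3%:Z) * (m%:Z * (m%:Z - 1) + K2)
    + (N%:Z - k%:Z) * (m%:Z * (m%:Z - 1) + K0) - lam * i%:Z).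
Proof.
move=> hk3 hk13 hkN hm hsort H HM h0 h1 h2.
pose UB : int := k3%:Z * (m%:Z * (m%:Z - 1) + K1) + (k%:Z - k3%:Z) * (m%:Z * (m%:Z - 1) + K2)
    + (N%:Z - k%:Z) * (m%:Z * (m%:Z - 1) + K0) - lam * i%:Z.
have L := upper_gen R N m k k1 k3 n g s nu i UB hk3 hk13 hsort H.
suff : ((m - 1) * k3)%N%:Z + (n - i)%N%:Z * (nu i)%:Z <=
    g%:Z * (n%:Z * n%:Z - n%:Z) - g%:Z * (i%:Z * i%:Z - i%:Z) + UB.
  have ed : ((m - 1) * k3)%N%:Z = (m%:Z - 1) * k3%:Z.
    by rewrite PoszM; congr (_ * _); lia.
  rewrite ed /UB; lia.
apply: L => e he.
have := ler_sum (index_enum 'I_N) (P := xpredT)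
   (G := fun q => ((0 <= q < k3)%N : nat)%:Z * (m%:Z * (m%:Z - 1) + K1) +
                  ((k3 <= q < k)%N : nat)%:Z * (m%:Z * (m%:Z - 1) + K2) +
                  ((k <= q < N)%N : nat)%:Z * (m%:Z * (m%:Z - 1) + K0) - lam * (e q)%:Z)
   (F := fun q => let M := (\sum_(i < n) (s i == q : nat))%:Z in
     (M * M - M) - ((e q)%:Z * (e q)%:Z - (e q)%:Z) + ((q < k3)%N : nat)%:Z * M +
     (((q < k3)%N : nat)%:Z + 2 * ((k3 <= q < k)%N : nat)%:Z) * (M - (e q)%:Z)).
rewrite sum3 he !icount // ?(leq_trans hk3 hkN) // subn0 => h.
apply: le_trans (h _) _; last first.
  have -> : (k - k3)%N%:Z = k%:Z - k3%:Z by lia.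
  have -> : (N - k)%N%:Z = N%:Z - k%:Z by lia.
  by [].
move=> q _ /=; rewrite HM ltn_ord andbT.
have e0 := h0 (e q)%:Z ltac:(lia).
have e1 := h1 (e q)%:Z ltac:(lia).
have e2 := h2 (e q)%:Z ltac:(lia).
case: (ltnP q k3) => hq3; case: (ltnP q k) => hqk /=; lia.
Qed.

Lemma upF1 (R : rcfType) N m k k1 k3 n g (s : 'I_n -> 'I_N) (nu : 'X_{1..n}) (p j : nat) (i : 'I_n) :
  (k3 <= k)%N -> (k - k1 <= k3)%N -> (k <= N)%N -> (1 <= m)%N -> n = (m * N - k)%N ->
  (forall i j : 'I_n, (i <= j)%N -> (nu i <= nu j)%N) ->
  (vdm_pow R n g * Pm R n N m k k1 k3 s)@_nu != 0 ->
  (forall q : 'I_N, (\sum_(i < n) (s i == q : nat))%N = if (q < k)%N then (m - 1)%N else m) ->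
  (p < m)%N -> (1 <= j <= N - k)%N -> val i = (p * N + j - 1)%N ->
  (nu i <= m + p - 1 + ((m + p) * N - k + j - 2) * g)%N.
Proof.
move=> hk3 hk13 hkN hm hn hsort H HM hp /andP [hj1 hj2] hi.
have hin := ltn_ord i.
have hi' : (nat_of_ord i = p * N + j - 1)%N by [].
have -> : ((m + p) * N - k + j - 2 = n + i - 1)%N by rewrite hi' hn; lia.
have L := upG R N m k k1 k3 n g s nu i (2 * p%:Z) (p%:Z * p%:Z + p%:Z) (p%:Z * p%:Z)
  (p%:Z * p%:Z - p%:Z) hk3 hk13 hkN hm hsort H HM.
have L' := L ltac:(by move=> e he; have := tangent e p%:Z; lia)
              ltac:(by move=> e he; have := sqr_ge0 (e - p%:Z); lia)
              ltac:(by move=> e he; have := tangent e (p%:Z - 1); lia).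
apply: (up_fin _ _ _ _ _ _ hin L').
have e1 : (n - i)%N%:Z = m%:Z * N%:Z - k%:Z - p%:Z * N%:Z - j%:Z + 1 by rewrite hi' hn; lia.
have e2 : (nat_of_ord i)%:Z = p%:Z * N%:Z + j%:Z - 1 by rewrite hi'; lia.
have e3 : (m + p - 1)%N%:Z = m%:Z + p%:Z - 1 by lia.
rewrite e1 e2 e3.
have : 0 <= (m%:Z - p%:Z) * (N%:Z - k%:Z - j%:Z) by apply: mulr_ge0; lia.
have : 0 <= k3%:Z * (m%:Z - p%:Z - 1) by apply: mulr_ge0; lia.
lia.
Qed.

Lemma upF2 (R : rcfType) N m k k1 k3 n g (s : 'I_n -> 'I_N) (nu : 'X_{1..n}) (p j : nat) (i : 'I_n) :
  (k3 <= k)%N -> (k - k1 <= k3)%N -> (k <= N)%N -> (1 <= m)%N -> n = (m * N - k)%N ->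
  (forall i j : 'I_n, (i <= j)%N -> (nu i <= nu j)%N) ->
  (vdm_pow R n g * Pm R n N m k k1 k3 s)@_nu != 0 ->
  (forall q : 'I_N, (\sum_(i < n) (s i == q : nat))%N = if (q < k)%N then (m - 1)%N else m) ->
  (p + 2 <= m)%N -> (N - k + 1 <= j <= N - k + k3)%N -> val i = (p * N + j - 1)%N ->
  (nu i <= m + p - 1 + ((m + p) * N - k + j - 2) * g)%N.
Proof.
move=> hk3 hk13 hkN hm hn hsort H HM hp /andP [hj1 hj2] hi.
have hin := ltn_ord i.
have hi' : (nat_of_ord i = p * N + j - 1)%N by [].
have -> : ((m + p) * N - k + j - 2 = n + i - 1)%N by rewrite hi' hn; lia.
have L := upG R N m k k1 k3 n g s nu i (2 * p%:Z + 1) ((p%:Z + 1) * (p%:Z + 1)) (p%:Z * (p%:Z + 1))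
  (p%:Z * p%:Z) hk3 hk13 hkN hm hsort H HM.
have L' := L ltac:(by move=> e he; have := sqr_ge0 (e - p%:Z - 1); lia)
              ltac:(by move=> e he; have := tangent e p%:Z; lia)
              ltac:(by move=> e he; have := sqr_ge0 (e - p%:Z); lia).
apply: (up_fin _ _ _ _ _ _ hin L').
have e1 : (n - i)%N%:Z = m%:Z * N%:Z - k%:Z - p%:Z * N%:Z - j%:Z + 1 by rewrite hi' hn; lia.
have e2 : (nat_of_ord i)%:Z = p%:Z * N%:Z + j%:Z - 1 by rewrite hi'; lia.
have e3 : (m + p - 1)%N%:Z = m%:Z + p%:Z - 1 by lia.
rewrite e1 e2 e3.
have : 0 <= (m%:Z - p%:Z - 1) * (N%:Z - k%:Z + k3%:Z - j%:Z) by apply: mulr_ge0; lia.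
lia.
Qed.

Lemma upF3 (R : rcfType) N m k k1 k3 n g (s : 'I_n -> 'I_N) (nu : 'X_{1..n}) (p j : nat) (i : 'I_n) :
  (k3 <= k)%N -> (k - k1 <= k3)%N -> (k <= N)%N -> (1 <= m)%N -> n = (m * N - k)%N ->
  (forall i j : 'I_n, (i <= j)%N -> (nu i <= nu j)%N) ->
  (vdm_pow R n g * Pm R n N m k k1 k3 s)@_nu != 0 ->
  (forall q : 'I_N, (\sum_(i < n) (s i == q : nat))%N = if (q < k)%N then (m - 1)%N else m) ->
  (p + 2 <= m)%N -> (N - k + k3 + 1 <= j <= N)%N -> val i = (p * N + j - 1)%N ->
  (nu i <= m + p + ((m + p) * N - k + j - 2) * g)%N.
Proof.
move=> hk3 hk13 hkN hm hn hsort H HM hp /andP [hj1 hj2] hi.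
have hin := ltn_ord i.
have hi' : (nat_of_ord i = p * N + j - 1)%N by [].
have -> : ((m + p) * N - k + j - 2 = n + i - 1)%N by rewrite hi' hn; lia.
have L := upG R N m k k1 k3 n g s nu i (2 * p%:Z + 2) ((p%:Z + 1) * (p%:Z + 2))
  ((p%:Z + 1) * (p%:Z + 1)) (p%:Z * (p%:Z + 1)) hk3 hk13 hkN hm hsort H HM.
have L' := L ltac:(by move=> e he; have := tangent e (p%:Z + 1); lia)
              ltac:(by move=> e he; have := sqr_ge0 (e - p%:Z - 1); lia)
              ltac:(by move=> e he; have := tangent e p%:Z; lia).
apply: (up_fin _ _ _ _ _ _ hin L').
have e1 : (n - i)%N%:Z = m%:Z * N%:Z - k%:Z - p%:Z * N%:Z - j%:Z + 1 by rewrite hi' hn; lia.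
have e2 : (nat_of_ord i)%:Z = p%:Z * N%:Z + j%:Z - 1 by rewrite hi'; lia.
rewrite e1 e2.
have : 0 <= (m%:Z - p%:Z - 1) * (2 * N%:Z - k%:Z - j%:Z) by apply: mulr_ge0; lia.
have : 0 <= k3%:Z * (m%:Z - p%:Z - 2) by apply: mulr_ge0; lia.
lia.
Qed.

Theorem proposition2 (R : rcfType) (N m k k1 k2 k3 n g : nat)
    (s : 'I_n -> 'I_N) (nu : 'X_{1..n}) :
  (1 <= N)%N -> (1 <= m)%N ->
  (k1 + k2 + k3 = 2 * k)%N ->
  (k1 <= k)%N -> (k2 <= k)%N -> (k3 <= k)%N -> (k <= N)%N ->
  n = (m * N - k)%N ->
  is_partition_mk n N m k s ->
  (forall i j : 'I_n, (i <= j)%N -> (nu i <= nu j)%N) ->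
  (vdm_pow R n g * Pm R n N m k k1 k3 s)@_nu != 0 ->
  (* lower bounds *)
  [/\
      (forall (p j : nat) (i : 'I_n), (p + 2 <= m)%N -> (1 <= j <= N - k1)%N ->
         val i = (p * N + j - 1)%N -> (p + (p * N + j - 1) * g <= nu i)%N),
      (forall (p j : nat) (i : 'I_n), (p + 2 <= m)%N -> (N - k1 + 1 <= j <= N)%N ->
         val i = (p * N + j - 1)%N -> (p + 1 + (p * N + j - 1) * g <= nu i)%N) &
      (forall (j : nat) (i : 'I_n), (1 <= j <= N - k)%N ->
         val i = ((m - 1) * N + j - 1)%N ->
         (m - 1 + ((m - 1) * N + j - 1) * g <= nu i)%N)] /\
  (* upper bounds *)
  [/\
      (forall (p j : nat) (i : 'I_n), (p < m)%N -> (1 <= j <= N - k)%N ->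
         val i = (p * N + j - 1)%N ->
         (nu i <= m + p - 1 + ((m + p) * N - k + j - 2) * g)%N),
      (forall (p j : nat) (i : 'I_n), (p + 2 <= m)%N ->
         (N - k + 1 <= j <= N - k + k3)%N ->
         val i = (p * N + j - 1)%N ->
         (nu i <= m + p - 1 + ((m + p) * N - k + j - 2) * g)%N) &
      (forall (p j : nat) (i : 'I_n), (p + 2 <= m)%N ->
         (N - k + k3 + 1 <= j <= N)%N ->
         val i = (p * N + j - 1)%N ->
         (nu i <= m + p + ((m + p) * N - k + j - 2) * g)%N)].
Proof.
move=> hN hm hk hk1 hk2 hk3 hkN hn hpart hsort H.
have hk13 : (k - k1 <= k3)%N by lia.
have HM := partM _ _ _ _ _ hpart.
split; split.
- move=> p j i hp /andP [hj1 hj2] hi.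
  exact: (lowA R N m k k1 k3 n g s nu p j p i hk3 hsort H hj1 hi erefl).
- move=> p j i hp /andP [hj1 hj2] hi.
  apply: (lowB R N m k k1 k3 n g s nu p j i hk3 hk1 hkN hsort H hj1 _ hi); lia.
- move=> j i /andP [hj1 hj2] hi.
  exact: (lowA R N m k k1 k3 n g s nu (m - 1) j (m - 1) i hk3 hsort H hj1 hi erefl).
- move=> p j i hp hj hi.
  exact: (upF1 R N m k k1 k3 n g s nu p j i hk3 hk13 hkN hm hn hsort H HM hp hj hi).
- move=> p j i hp hj hi.
  exact: (upF2 R N m k k1 k3 n g s nu p j i hk3 hk13 hkN hm hn hsort H HM hp hj hi).
- move=> p j i hp hj hi.
  exact: (upF3 R N m k k1 k3 n g s nu p j i hk3 hk13 hkN hm hn hsort H HM hp hj hi).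
Qed.
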